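(* Under the standing assumptions, for fixed $\lambda>0$ and $\eta_1=\frac1d+\frac{\lambda}{n^{1-(k-1)\alpha}\ln d}$, $$\Phi(n\eta_1)=o\!\left(\exp\left\{-\left(\frac{\lambda^2}{2}+o(1)\right)\frac{n^{(2k-1)\alpha-1}}{(\ln d)^2}\right\}\right)\quad(n\to\infty),$$ where $n\eta_1$ is treated as an integer (equivalently, $\Phi$ is evaluated through its Gamma-function extension $\Phi_c$).
   Context: Parameters: integer $k\ge2$, constants $\alpha>0$, $r>0$, $0<p<1$; $d=n^{\alpha}$ (treated as an integer), $m=n\ln d$, $\tau=\frac1{1-p}$, $r_{cr}=\frac1{\ln\tau}$. Standing assumptions: $(2k-1)\alpha>1$, $k\alpha\le1$, $k\ge\frac{\tau\ln\tau}{\tau-1}$, and $r<r_{cr}$. Notation: $f(s)=1+\frac{p}{1-p}\cdot\frac{s^k-d^{-k}}{1-d^{-k}}$ for $s\in[0,1]$; $B(S)=\binom{n}{S}\left(\frac1d\right)^{S}\left(1-\frac1d\right)^{n-S}$; $W(S)=f(S/n)^{rm}$; $\Phi(S)=B(S)W(S)$; its real extension is $\Phi_c(z)=\frac{\Gamma(n+1)}{\Gamma(z+1)\Gamma(n-z+1)}\left(\frac1d\right)^{z}\left(1-\frac1d\right)^{n-z}f(z/n)^{rm}$ for $z\in[0,n]$. *)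

(* Defs.v *)
From Stdlib Require Import Reals.
From Coquelicot Require Import Coquelicot.
Open Scope R_scope.

Definition Gamma (x : R) : R :=
  RInt_gen (fun t => Rpower t (x - 1) * exp (- t)) (at_right 0) (Rbar_locally p_infty).

Definition dd (alpha : R) (n : nat) : R := Rpower (INR n) alpha.
Definition mm (alpha : R) (n : nat) : R := INR n * ln (dd alpha n).

Definition tau (p : R) : R := / (1 - p).
Definition r_cr (p : R) : R := / ln (tau p).

Definition f_fun (k : nat) (alpha p : R) (n : nat) (s : R) : R :=
  1 + p / (1 - p) * ((s ^ k - / (dd alpha n) ^ k) / (1 - / (dd alpha n) ^ k)).

Definition Phi_c (k : nat) (alpha r p : R) (n : nat) (z : R) : R :=
  Gamma (INR n + 1) / (Gamma (z + 1) * Gamma (INR n - z + 1))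
  * Rpower (/ dd alpha n) z * Rpower (1 - / dd alpha n) (INR n - z)
  * Rpower (f_fun k alpha p n (z / INR n)) (r * mm alpha n).

Definition eta1 (k : nat) (alpha lambda : R) (n : nat) : R :=
  / dd alpha n + lambda / (Rpower (INR n) (1 - (INR k - 1) * alpha) * ln (dd alpha n)).

Definition rate (k : nat) (alpha : R) (n : nat) : R :=
  Rpower (INR n) ((2 * INR k - 1) * alpha - 1) / (ln (dd alpha n)) ^ 2.

(* Main.v *)
Require Import Defs.
From Stdlib Require Import Reals Lra Lia Classical.
From Coquelicot Require Import Coquelicot.
Open Scope R_scope.

Lemma exp_le_mono x y : x <= y -> exp x <= exp y.
Proof. intros [H|H]; [left; apply exp_increasing; auto| subst; lra]. Qed.

Lemma ln_le_sub1 y : 0 < y -> ln y <= y - 1.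
Proof. intros Hy. pose proof (exp_ineq1_le (ln y)). rewrite exp_ln in H; lra. Qed.

Lemma ln_ge_1sub y : 0 < y -> 1 - / y <= ln y.
Proof. intros Hy. pose proof (ln_le_sub1 (/ y) (Rinv_0_lt_compat _ Hy)).
  rewrite ln_Rinv in H; lra. Qed.

Lemma ln_ge_2nd t : 1 <= t -> (1 - / t) + (1 - / t) ^ 2 / 2 <= ln t.
Proof.
  intros Ht.
  set (h := fun s => ln s - ((1 - / s) + (1 - / s) ^ 2 / 2)).
  assert (Hd : forall s, 0 < s -> is_derive h s (/ s * (1 - / s) ^ 2)).
  { intros s Hs. unfold h. auto_derive. lra. field. lra. }
  destruct (Req_dec t 1) as [E|E].
  { subst. rewrite ln_1. rewrite Rinv_1. lra. }
  destruct (MVT_gen h 1 t (fun s => / s * (1 - / s) ^ 2)) as [c [Hc Hm]].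
  - intros x Hx. apply Hd. rewrite Rmin_left in Hx; lra.
  - intros x Hx. apply continuity_pt_filterlim. apply (@ex_derive_continuous R_AbsRing R_NormedModule h x).
    eexists. apply Hd. rewrite Rmin_left in Hx; lra.
  - rewrite Rmin_left in Hc by lra. rewrite Rmax_right in Hc by lra.
    assert (h 1 = 0). { unfold h. rewrite ln_1, Rinv_1. lra. }
    assert (0 <= / c * (1 - / c) ^ 2 * (t - 1)).
    { apply Rmult_le_pos; [apply Rmult_le_pos|lra].
      left; apply Rinv_0_lt_compat; lra. apply pow2_ge_0. }
    unfold h in Hm. rewrite ln_1, Rinv_1 in Hm. lra.
Qed.

Lemma ball_R (x y e : R) : ball x e y <-> Rabs (y - x) < e.
Proof. reflexivity. Qed.

Lemma GI (f : R -> R) (M : R) :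
  (forall t, 0 < t -> continuous f t) ->
  (forall t, 0 < t -> 0 <= f t) ->
  (forall a b, 0 < a -> a <= b -> RInt f a b <= M) ->
  exists S, is_RInt_gen f (at_right 0) (Rbar_locally p_infty) S /\ S <= M /\
    forall a b, 0 < a -> a <= b -> RInt f a b <= S.
Proof.
  intros Hc Hp Hb.
  assert (Hex : forall a b, 0 < a -> a <= b -> ex_RInt f a b).
  { intros a b Ha Hab. apply (@ex_RInt_continuous R_CompleteNormedModule). intros z Hz.
    apply Hc. rewrite Rmin_left in Hz; lra. }
  assert (Hmono : forall a a0 b0 b, 0 < a -> a <= a0 -> a0 <= b0 -> b0 <= b ->
            RInt f a0 b0 <= RInt f a b).
  { intros a a0 b0 b H1 H2 H3 H4.
    rewrite <- (@RInt_Chasles R_CompleteNormedModule f a a0 b) by (apply Hex; lra).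
    rewrite <- (@RInt_Chasles R_CompleteNormedModule f a0 b0 b) by (apply Hex; lra).
    assert (0 <= RInt f a a0) by (apply RInt_ge_0; [lra|apply Hex; lra|intros; apply Hp; lra]).
    assert (0 <= RInt f b0 b) by (apply RInt_ge_0; [lra|apply Hex; lra|intros; apply Hp; lra]).
    change plus with Rplus. lra. }
  set (E := fun y => exists a b, 0 < a /\ a <= b /\ y = RInt f a b).
  destruct (completeness E) as [S [Hub Hlub]].
  { exists M. intros y [a [b [Ha [Hab ->]]]]. apply Hb; auto. }
  { exists (RInt f 1 1). exists 1, 1. repeat split; lra. }
  exists S. split; [|split].
  2:{ apply Hlub. intros y [a [b [Ha [Hab ->]]]]. apply Hb; auto. }
  2:{ intros a b Ha Hab. apply Hub. exists a, b. auto. }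
  intros P [eps HP].
  assert (Hy : exists a0 b0, 0 < a0 /\ a0 <= b0 /\ S - eps < RInt f a0 b0).
  { apply NNPP. intros Hn.
    assert (S <= S - eps).
    { apply Hlub. intros y [a [b [Ha [Hab ->]]]].
      apply Rnot_lt_le. intros Hl. apply Hn. exists a, b. auto. }
    destruct eps; simpl in *; lra. }
  destruct Hy as [a0 [b0 [Ha0 [Hab0 Hlt]]]].
  apply (Filter_prod _ _ _ (fun a => 0 < a /\ a < a0) (fun b => b0 < b)).
  - exists (mkposreal a0 Ha0). intros y Hy Hy0. rewrite ball_R in Hy. simpl in Hy.
    split; auto. apply Rabs_def2 in Hy. lra.
  - exists b0. auto.
  - intros a b [Ha Haa] Hbb. simpl. exists (RInt f a b). split.
    + apply (@RInt_correct R_CompleteNormedModule), Hex; lra.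
    + apply HP. rewrite ball_R.
      assert (RInt f a0 b0 <= RInt f a b) by (apply Hmono; lra).
      assert (RInt f a b <= S) by (apply Hub; exists a, b; repeat split; lra).
      apply Rabs_def1; lra.
Qed.

Lemma Gamma_bounds a : 0 < a ->
  exp (a * ln a - a - 1) <= Gamma (a + 1) <= (a + 1) * exp (a * ln (a + 1) - a).
Proof.
  intros Ha. unfold Gamma.
  set (f := fun t => Rpower t (a + 1 - 1) * exp (- t)).
  set (C := exp (a * ln (a + 1) - a)).
  set (g := fun t => C * exp (- t / (a + 1))).
  assert (Hf : forall t, 0 < t -> f t = exp (a * ln t - t)).
  { intros t Ht. unfold f, Rpower. rewrite <- exp_plus. f_equal. ring. }
  assert (Hfg : forall t, 0 < t -> f t <= g t).
  { intros t Ht. rewrite Hf by auto. unfold g, C. rewrite <- exp_plus.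
    apply exp_le_mono.
    assert (Hl := ln_le_sub1 (t / (a + 1)) ltac:(apply Rdiv_lt_0_compat; lra)).
    unfold Rdiv in Hl. rewrite ln_mult in Hl by (try apply Rinv_0_lt_compat; lra).
    rewrite ln_Rinv in Hl by lra.
    assert (a * (ln t + - ln (a + 1)) <= a * (t * / (a + 1) - 1)) by (apply Rmult_le_compat_l; lra).
    assert (a * (t * / (a + 1)) - t = - t / (a + 1)) by (field; lra).
    lra. }
  assert (Hcf : forall t, 0 < t -> continuous f t).
  { intros t Ht. apply (@ex_derive_continuous R_AbsRing R_NormedModule f t).
    unfold f, Rpower. auto_derive. lra. }
  assert (Hcg : forall t, continuous g t).
  { intros t. apply (@ex_derive_continuous R_AbsRing R_NormedModule g t).
    unfold g. auto_derive. lra. }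
  assert (HRg : forall x y, RInt g x y = (- C * (a + 1) * exp (- y / (a + 1))) - (- C * (a + 1) * exp (- x / (a + 1)))).
  { intros x y. apply is_RInt_unique.
    apply (@is_RInt_derive R_CompleteNormedModule (fun t => - C * (a + 1) * exp (- t / (a + 1))) g).
    - intros z _. unfold g. auto_derive. auto. unfold Rdiv. field. lra.
    - intros; apply Hcg. }
  destruct (GI f (C * (a + 1))) as [S [HS [HSM HSl]]].
  - exact Hcf.
  - intros t Ht. rewrite Hf by auto. left; apply exp_pos.
  - intros x y Hx Hxy. apply Rle_trans with (RInt g x y).
    + apply RInt_le; auto.
      * apply (@ex_RInt_continuous R_CompleteNormedModule). intros z Hz. apply Hcf.
        rewrite Rmin_left in Hz; lra.
      * apply (@ex_RInt_continuous R_CompleteNormedModule). intros z Hz. apply Hcg.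
      * intros z Hz. apply Hfg. lra.
    + rewrite HRg. assert (0 < C) by apply exp_pos.
      assert (0 < C * (a + 1) * exp (- y / (a + 1))).
      { apply Rmult_lt_0_compat; [apply Rmult_lt_0_compat; lra| apply exp_pos]. }
      assert (C * (a + 1) * exp (- x / (a + 1)) <= C * (a + 1)).
      { rewrite <- (Rmult_1_r (C * (a+1))) at 2. apply Rmult_le_compat_l. apply Rmult_le_pos; lra.
        apply Rle_trans with (exp 0); [apply exp_le_mono|rewrite exp_0; lra].
        assert (0 <= x / (a + 1)) by (apply Rdiv_le_0_compat; lra). unfold Rdiv in *. lra. }
      set (X := exp (- x / (a + 1))) in *. set (Y := exp (- y / (a + 1))) in *.
      assert (E : - C * (a + 1) * Y - - C * (a + 1) * X = C * (a + 1) * X - C * (a + 1) * Y) by ring.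
      rewrite E. lra.
  - rewrite (is_RInt_gen_unique f S HS). split.
    2: lra.
    apply Rle_trans with (RInt f a (a + 1)).
    2: apply HSl; lra.
    apply Rle_trans with (RInt (fun _ => exp (a * ln a - a - 1)) a (a + 1)).
    + rewrite RInt_const. simpl. unfold scal; simpl; unfold mult; simpl. lra.
    + apply RInt_le. lra. apply ex_RInt_const.
      apply (@ex_RInt_continuous R_CompleteNormedModule). intros z Hz. apply Hcf.
      rewrite Rmin_left in Hz; lra.
      intros z Hz. rewrite Hf by lra. apply exp_le_mono.
      assert (ln a <= ln z) by (apply ln_le; lra).
      assert (a * ln a <= a * ln z) by (apply Rmult_le_compat_l; lra). lra.
Qed.

Lemma ln_div x y : 0 < x -> 0 < y -> ln (x / y) = ln x - ln y.
Proof. intros; unfold Rdiv; rewrite ln_mult, ln_Rinv; try lra; apply Rinv_0_lt_compat; lra. Qed.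

Lemma Phi_det (N q z F R0 : R) :
  1 <= N -> 0 < q < 1 -> N * q <= z -> 0 < z < N -> 1 <= F -> 0 <= R0 ->
  0 <= Gamma (N + 1) / (Gamma (z + 1) * Gamma (N - z + 1)) * Rpower q z
         * Rpower (1 - q) (N - z) * Rpower F R0 <=
  exp (ln (N + 1) + 3 - (z - N * q) ^ 2 / (2 * z) + R0 * (F - 1)).
Proof.
  intros HN Hq Hz Hz2 HF HR.
  destruct (Gamma_bounds N ltac:(lra)) as [_ GN].
  destruct (Gamma_bounds z ltac:(lra)) as [Gz _].
  destruct (Gamma_bounds (N - z) ltac:(lra)) as [Gw _].
  assert (Pz := exp_pos (z * ln z - z - 1)).
  assert (Pw := exp_pos ((N - z) * ln (N - z) - (N - z) - 1)).
  assert (HGz : 0 < Gamma (z + 1)) by lra.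
  assert (HGw : 0 < Gamma (N - z + 1)) by lra.
  assert (HGN : 0 <= Gamma (N + 1)) by (pose proof (Gamma_bounds N ltac:(lra)); pose proof (exp_pos (N * ln N - N - 1)); lra).
  unfold Rpower.
  set (A := Gamma (N + 1) / (Gamma (z + 1) * Gamma (N - z + 1))).
  assert (HA0 : 0 <= A) by (unfold A; apply Rdiv_le_0_compat; [lra| apply Rmult_lt_0_compat; lra]).
  assert (HA : A <= exp (ln (N + 1) + N * ln (N + 1) - N - (z * ln z - z - 1) - ((N - z) * ln (N - z) - (N - z) - 1))).
  { unfold A. apply Rle_trans with ((N + 1) * exp (N * ln (N + 1) - N) / (exp (z * ln z - z - 1) * exp ((N - z) * ln (N - z) - (N - z) - 1))).
    - unfold Rdiv. apply Rmult_le_compat; auto.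
      + left; apply Rinv_0_lt_compat, Rmult_lt_0_compat; lra.
      + apply Rinv_le_contravar. apply Rmult_lt_0_compat; lra. apply Rmult_le_compat; lra.
    - rewrite <- (exp_ln (N + 1)) at 1 by lra. rewrite <- !exp_plus. unfold Rdiv.
      rewrite <- exp_Ropp, <- exp_plus. right. f_equal. ring. }
  split.
  { apply Rmult_le_pos; [apply Rmult_le_pos; [apply Rmult_le_pos|]|]; try exact HA0; left; apply exp_pos. }
  apply Rle_trans with (exp (ln (N + 1) + N * ln (N + 1) - N - (z * ln z - z - 1) - ((N - z) * ln (N - z) - (N - z) - 1)) * exp (z * ln q) * exp ((N - z) * ln (1 - q)) * exp (R0 * ln F)).
  { repeat apply Rmult_le_compat_r; try (left; apply exp_pos). auto. }
  rewrite <- !exp_plus. apply exp_le_mono.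
  assert (H1 : N * ln (N + 1) <= N * ln N + 1).
  { assert (ln (N + 1) - ln N <= 1 / N).
    { rewrite <- ln_div by lra. pose proof (ln_le_sub1 ((N + 1) / N) ltac:(apply Rdiv_lt_0_compat; lra)).
      assert ((N + 1) / N - 1 = 1 / N) by (field; lra). lra. }
    assert (N * (ln (N + 1) - ln N) <= N * (1 / N)) by (apply Rmult_le_compat_l; lra).
    assert (N * (1 / N) = 1) by (field; lra). lra. }
  assert (H2 : (z - N * q) + (z - N * q) ^ 2 / (2 * z) <= z * (ln z - ln N - ln q)).
  { pose proof (ln_ge_2nd (z / (N * q))).
    assert (1 <= z / (N * q)).
    { apply (Rmult_le_reg_r (N * q)). nra. unfold Rdiv. rewrite Rmult_assoc, Rinv_l by nra. lra. }
    specialize (H H0). rewrite ln_div, ln_mult in H by nra.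
    assert (z * (1 - / (z / (N * q)) + (1 - / (z / (N * q))) ^ 2 / 2) <= z * (ln z - (ln N + ln q))) by (apply Rmult_le_compat_l; lra).
    assert (z * (1 - / (z / (N * q)) + (1 - / (z / (N * q))) ^ 2 / 2) = (z - N * q) + (z - N * q) ^ 2 / (2 * z)).
    { field. split; nra. }
    lra. }
  assert (H3 : (N - z) - N * (1 - q) <= (N - z) * (ln (N - z) - ln N - ln (1 - q))).
  { pose proof (ln_ge_1sub ((N - z) / (N * (1 - q))) ltac:(apply Rdiv_lt_0_compat; nra)).
    rewrite ln_div, ln_mult in H by nra.
    assert ((N - z) * (1 - / ((N - z) / (N * (1 - q)))) <= (N - z) * (ln (N - z) - (ln N + ln (1 - q)))) by (apply Rmult_le_compat_l; lra).
    assert ((N - z) * (1 - / ((N - z) / (N * (1 - q)))) = (N - z) - N * (1 - q)) by (field; split; nra).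
    lra. }
  assert (H4 : R0 * ln F <= R0 * (F - 1)) by (apply Rmult_le_compat_l; auto; apply ln_le_sub1; lra).
  nra.
Qed.

Lemma powdiff (k : nat) (e q : R) : 0 <= q <= e ->
  e ^ (S k) - q ^ (S k) <= INR (S k) * e ^ k * (e - q).
Proof.
  intros Hq. induction k.
  - simpl. lra.
  - rewrite S_INR. 
    assert (He : 0 <= e ^ k) by (apply pow_le; lra).
    assert (Hqk : q ^ S k <= e ^ S k) by (apply pow_incr; lra).
    replace (e ^ S (S k) - q ^ S (S k)) with (e * (e ^ S k - q ^ S k) + q ^ S k * (e - q)) by (simpl; ring).
    assert (e * (e ^ S k - q ^ S k) <= e * (INR (S k) * e ^ k * (e - q))) by (apply Rmult_le_compat_l; lra).
    assert (q ^ S k * (e - q) <= e ^ S k * (e - q)) by (apply Rmult_le_compat_r; lra).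
    simpl in *. nra.
Qed.

Lemma pow_le1 x n : 0 <= x <= 1 -> x ^ n <= 1.
Proof. intros H. rewrite <- (pow1 n). apply pow_incr. lra. Qed.

Lemma F_bound (k : nat) (p A e : R) : (1 <= k)%nat -> 0 < p < 1 -> 2 <= A -> / A <= e ->
  1 <= 1 + p / (1 - p) * ((e ^ k - / A ^ k) / (1 - / A ^ k)) /\
  1 + p / (1 - p) * ((e ^ k - / A ^ k) / (1 - / A ^ k)) - 1 <=
  p / (1 - p) * (2 * INR k * e ^ (k - 1) * (e - / A)).
Proof.
  intros Hk Hp HA He.
  assert (HA1 : 0 < / A) by (apply Rinv_0_lt_compat; lra).
  assert (HA2 : / A <= / 2) by (apply Rinv_le_contravar; lra).
  rewrite <- pow_inv.
  set (Q := / A) in *.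
  destruct k as [|k']; [lia|]. replace (S k' - 1)%nat with k' by lia.
  assert (HQk : Q ^ S k' <= Q).
  { simpl. apply Rle_trans with (Q * 1); [apply Rmult_le_compat_l; [lra| apply pow_le1; lra] | lra]. }
  assert (HQk0 : 0 < Q ^ S k') by (apply pow_lt; lra).
  assert (Hek : Q ^ S k' <= e ^ S k') by (apply pow_incr; lra).
  assert (Hpd := powdiff k' e Q ltac:(lra)).
  assert (Hpp : 0 < p / (1 - p)) by (apply Rdiv_lt_0_compat; lra).
  assert (Hd : 0 <= (e ^ S k' - Q ^ S k') / (1 - Q ^ S k')) by (apply Rdiv_le_0_compat; lra).
  split.
  - assert (0 <= p / (1 - p) * ((e ^ S k' - Q ^ S k') / (1 - Q ^ S k'))) by (apply Rmult_le_pos; lra). lra.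
  - replace (1 + p / (1 - p) * ((e ^ S k' - Q ^ S k') / (1 - Q ^ S k')) - 1) with (p / (1 - p) * ((e ^ S k' - Q ^ S k') / (1 - Q ^ S k'))) by ring.
    apply Rmult_le_compat_l; [lra|].
    apply Rle_trans with (2 * (e ^ S k' - Q ^ S k')).
    + unfold Rdiv. rewrite Rmult_comm. apply Rmult_le_compat_r; [lra|].
      rewrite <- (Rinv_inv 2). apply Rinv_le_contravar; lra.
    + lra.
Qed.

Lemma exp_ge_pow4 y : 0 <= y -> (y / 4) ^ 4 <= exp y.
Proof.
  intros Hy. replace (exp y) with ((exp (y / 4)) ^ 4).
  - apply pow_incr. split; [lra|]. pose proof (exp_ineq1_le (y / 4)). lra.
  - simpl. rewrite Rmult_1_r, <- !exp_plus. f_equal. field.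
Qed.

Lemma ev_ln (X : R) : exists n0 : nat, forall n, (n0 <= n)%nat -> X <= ln (INR n).
Proof.
  destruct (INR_archimed 1 (exp X)) as [n0 Hn0]; [lra|].
  exists n0. intros n Hn. apply le_INR in Hn.
  rewrite <- (ln_exp X). apply ln_le. apply exp_pos. lra.
Qed.

Definition Kc (k : nat) (r p lambda : R) := 2 * r * (p / (1 - p)) * INR k * lambda * 2 ^ (k - 1).
Definition delt (k : nat) (alpha lambda : R) (n : nat) :=
  lambda * exp ((INR k * alpha - 1) * ln (INR n)) / (alpha * ln (INR n)).
Definition epsn (k : nat) (alpha r p lambda : R) (n : nat) :=
  - (ln (INR n + 1) + 3 + Kc k r p lambda + ln (INR n)) / rate k alpha n
  + lambda ^ 2 / 2 * (1 / (1 + delt k alpha lambda n) - 1).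
Definition X0 (alpha lambda : R) := 1 + / alpha + lambda / alpha.

Lemma ln0 : ln 0 = 0.
Proof. unfold ln. case (Rlt_dec 0 0). intros H; exfalso; exact (Rlt_irrefl 0 H). intros; reflexivity. Qed.

Lemma basic_n (alpha lambda : R) (n : nat) : 0 < alpha -> 0 < lambda ->
  X0 alpha lambda <= ln (INR n) ->
  1 < INR n /\ 1 <= ln (INR n) /\ 1 <= alpha * ln (INR n) /\ lambda / (alpha * ln (INR n)) <= 1.
Proof.
  intros Ha Hl HX. unfold X0 in HX.
  assert (0 < / alpha) by (apply Rinv_0_lt_compat; lra).
  assert (0 < lambda / alpha) by (apply Rdiv_lt_0_compat; lra).
  set (L := ln (INR n)) in *.
  assert (HB : 1 < INR n).
  { destruct (Rle_lt_dec (INR n) 1) as [H1|H1]; auto.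
    pose proof (pos_INR n). destruct (Req_dec (INR n) 0) as [E|E].
    - unfold L in HX. rewrite E, ln0 in HX. lra.
    - assert (ln (INR n) <= ln 1) by (apply ln_le; lra). rewrite ln_1 in H3. unfold L in HX. lra. }
  split; auto. split; [lra|].
  assert (alpha * L >= alpha * (/ alpha + lambda / alpha)) by (apply Rmult_ge_compat_l; lra).
  assert (E : alpha * (/ alpha + lambda / alpha) = 1 + lambda) by (field; lra).
  split; [lra|].
  apply (Rmult_le_reg_r (alpha * L)); [lra|]. unfold Rdiv. rewrite Rmult_assoc, Rinv_l by lra. lra.
Qed.

Lemma alg_id (L B A Kp lam al K R1 : R) :
  0 < L -> 0 < B -> 0 < A -> 0 < Kp -> 0 < lam -> 0 < al ->
  let rt := Kp * Kp / (A * B) / (al * L) ^ 2 in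
  let d := lam * (Kp / B) / (al * L) in
  let z := B * (/ A + lam / (B * A / Kp * (al * L))) in
  R1 + 3 - (z - B * / A) ^ 2 / (2 * z) + K
  + (lam ^ 2 / 2 + (- (R1 + 3 + K + L) / rt + lam ^ 2 / 2 * (1 / (1 + d) - 1))) * rt = - L.
Proof.
  intros. unfold rt, d, z. field.
  assert (0 < B * (al * L)) by (apply Rmult_lt_0_compat; nra).
  assert (0 < lam * Kp) by nra.
  repeat split; lra.
Qed.

Lemma exp_minus x y : exp (x - y) = exp x / exp y.
Proof. unfold Rminus, Rdiv. rewrite exp_plus, exp_Ropp. reflexivity. Qed.

Lemma core k alpha r p lambda n :
  (2 <= k)%nat -> 0 < alpha -> 0 < r -> 0 < p < 1 ->
  (2 * INR k - 1) * alpha > 1 -> INR k * alpha <= 1 -> 0 < lambda ->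
  X0 alpha lambda <= ln (INR n) ->
  0 <= Phi_c k alpha r p n (INR n * eta1 k alpha lambda n)
       / exp (- (lambda ^ 2 / 2 + epsn k alpha r p lambda n) * rate k alpha n) <= / INR n.
Proof.
  intros Hk Ha Hr Hp Hk1 Hk2 Hl HX.
  destruct (basic_n alpha lambda n Ha Hl HX) as [HB [HL1 [HaL Hlam]]].
  set (L := ln (INR n)) in *.
  set (B := INR n) in *.
  assert (HBe : exp L = B) by (apply exp_ln; lra).
  assert (HdA : dd alpha n = exp (alpha * L)) by reflexivity.
  set (A := exp (alpha * L)) in *.
  assert (HlnA : ln A = alpha * L) by apply ln_exp.
  assert (HA2 : 2 < A) by (pose proof (exp_ineq1 (alpha * L) ltac:(lra)); unfold A; lra).
  set (Kp := A ^ k).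
  assert (HKp0 : 0 < Kp) by (apply pow_lt; lra).
  assert (HKp : exp (INR k * alpha * L) = Kp).
  { unfold Kp. rewrite <- Rpower_pow by lra. unfold Rpower. rewrite HlnA. f_equal. ring. }
  assert (E1 : exp ((INR k * alpha - 1) * L) = Kp / B).
  { rewrite <- HKp, <- HBe, <- exp_minus. f_equal. clearbody L. ring. }
  assert (E2 : Rpower (INR n) (1 - (INR k - 1) * alpha) = B * A / Kp).
  { unfold Rpower. change (ln (INR n)) with L. rewrite <- HKp, <- HBe. unfold A. rewrite <- exp_plus, <- exp_minus. f_equal. ring. }
  assert (E3 : Rpower (INR n) ((2 * INR k - 1) * alpha - 1) = Kp * Kp / (A * B)).
  { unfold Rpower. change (ln (INR n)) with L. rewrite <- HKp, <- HBe. unfold A. rewrite <- !exp_plus, <- exp_minus. f_equal. ring. }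
  assert (Hrt : rate k alpha n = Kp * Kp / (A * B) / (alpha * L) ^ 2).
  { unfold rate. rewrite E3, HdA. fold A. rewrite HlnA. reflexivity. }
  assert (Hdel : delt k alpha lambda n = lambda * (Kp / B) / (alpha * L)).
  { unfold delt. change (ln (INR n)) with L. rewrite E1. reflexivity. }
  assert (He : eta1 k alpha lambda n = / A + lambda / (B * A / Kp * (alpha * L))).
  { unfold eta1. rewrite E2, HdA. fold A. rewrite HlnA. reflexivity. }
  set (e := eta1 k alpha lambda n) in *.
  set (d := delt k alpha lambda n) in *.
  assert (HKB : Kp / B <= 1).
  { rewrite <- E1. apply Rle_trans with (exp 0); [apply exp_le_mono; nra| rewrite exp_0; lra]. }
  assert (HKB0 : 0 < Kp / B) by (apply Rdiv_lt_0_compat; lra).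
  assert (Hd0 : 0 < d).
  { rewrite Hdel. apply Rdiv_lt_0_compat; [apply Rmult_lt_0_compat|]; lra. }
  assert (Hd1 : d <= 1).
  { rewrite Hdel. unfold Rdiv in *. rewrite Rmult_assoc.
    apply Rle_trans with (lambda * / (alpha * L)); auto.
    apply Rmult_le_compat_l; [lra|].
    rewrite <- (Rmult_1_l (/ (alpha * L))) at 2. apply Rmult_le_compat_r; [|lra].
    left; apply Rinv_0_lt_compat; lra. }
  assert (HeA : e * A = 1 + d).
  { rewrite He, Hdel. field. repeat split; try lra. }
  assert (HA0 : 0 < / A) by (apply Rinv_0_lt_compat; lra).
  assert (He1 : / A <= e).
  { rewrite He. assert (0 <= lambda / (B * A / Kp * (alpha * L))).
    { apply Rdiv_le_0_compat; [lra|]. apply Rmult_lt_0_compat; [|lra].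
      apply Rdiv_lt_0_compat; [apply Rmult_lt_0_compat|]; lra. }
    lra. }
  assert (He2 : e < 1).
  { assert (e = (1 + d) * / A) by (rewrite <- HeA; field; lra).
    assert (/ A < / 2) by (apply Rinv_lt_contravar; lra).
    rewrite H. apply Rle_lt_trans with (2 * / A). apply Rmult_le_compat_r; lra. lra. }
  unfold Phi_c. rewrite HdA.
  set (z := B * e).
  assert (Hzn : z / INR n = e) by (unfold z; change (INR n) with B; field; lra).
  rewrite Hzn.
  destruct (F_bound k p A e ltac:(lia) Hp ltac:(lra) He1) as [HF1 HF2].
  assert (HfF : f_fun k alpha p n e = 1 + p / (1 - p) * ((e ^ k - / A ^ k) / (1 - / A ^ k))).
  { unfold f_fun. rewrite HdA. reflexivity. }
  rewrite HfF.
  set (F := 1 + p / (1 - p) * ((e ^ k - / A ^ k) / (1 - / A ^ k))) in *.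
  assert (HR0 : r * mm alpha n = r * (B * (alpha * L))).
  { unfold mm. rewrite HdA, HlnA. reflexivity. }
  rewrite HR0.
  set (R0 := r * (B * (alpha * L))).
  assert (HR00 : 0 <= R0) by (unfold R0; apply Rmult_le_pos; [lra| apply Rmult_le_pos; lra]).
  assert (HW : R0 * (F - 1) <= Kc k r p lambda).
  { assert (HG : B * (alpha * L) * (e - / A) = lambda * A ^ (k - 1)).
    { assert (HAk : A ^ k = A * A ^ (k - 1)).
      { destruct k as [|k']; [lia|]. simpl. rewrite Nat.sub_0_r. reflexivity. }
      assert (0 < A ^ (k - 1)) by (apply pow_lt; lra).
      rewrite He. unfold Kp. rewrite HAk. field. repeat split; try lra. }
    apply Rle_trans with (R0 * (p / (1 - p) * (2 * INR k * e ^ (k - 1) * (e - / A)))).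
    { apply Rmult_le_compat_l; auto. }
    replace (R0 * (p / (1 - p) * (2 * INR k * e ^ (k - 1) * (e - / A))))
      with (2 * r * (p / (1 - p)) * INR k * e ^ (k - 1) * (B * (alpha * L) * (e - / A))) by (unfold R0; ring).
    rewrite HG.
    replace (2 * r * (p / (1 - p)) * INR k * e ^ (k - 1) * (lambda * A ^ (k - 1)))
      with (2 * r * (p / (1 - p)) * INR k * lambda * (e * A) ^ (k - 1)) by (rewrite Rpow_mult_distr; ring).
    unfold Kc. apply Rmult_le_compat_l.
    { assert (0 < p / (1 - p)) by (apply Rdiv_lt_0_compat; lra).
      assert (0 <= INR k) by apply pos_INR. 
      apply Rmult_le_pos; [|lra]. apply Rmult_le_pos; [|lra]. apply Rmult_le_pos; lra. }
    rewrite HeA. apply pow_incr. lra. }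
  change (INR n) with B.
  assert (HzB : B * / A <= z) by (unfold z; apply Rmult_le_compat_l; lra).
  assert (Hz0 : 0 < z < B).
  { unfold z. split. apply Rmult_lt_0_compat; lra.
    rewrite <- (Rmult_1_r B) at 2. apply Rmult_lt_compat_l; lra. }
  assert (HA1 : / A < 1) by (rewrite <- Rinv_1; apply Rinv_lt_contravar; lra).
  destruct (Phi_det B (/ A) z F R0 ltac:(lra) ltac:(lra) HzB Hz0 HF1 HR00) as [P0 P1].
  set (PV := Gamma (B + 1) / (Gamma (z + 1) * Gamma (B - z + 1)) * Rpower (/ A) z *
       Rpower (1 - / A) (B - z) * Rpower F R0) in *.
  unfold epsn. change (ln (INR n)) with L. change (INR n) with B. change (delt k alpha lambda n) with d.
  rewrite Hrt, Hdel.
  set (Y := (lambda ^ 2 / 2 + (- (ln (B + 1) + 3 + Kc k r p lambda + L) / (Kp * Kp / (A * B) / (alpha * L) ^ 2) +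
        lambda ^ 2 / 2 * (1 / (1 + lambda * (Kp / B) / (alpha * L)) - 1))) * (Kp * Kp / (A * B) / (alpha * L) ^ 2)).
  replace (PV / exp (- (lambda ^ 2 / 2 + (- (ln (B + 1) + 3 + Kc k r p lambda + L) / (Kp * Kp / (A * B) / (alpha * L) ^ 2) +
        lambda ^ 2 / 2 * (1 / (1 + lambda * (Kp / B) / (alpha * L)) - 1))) * (Kp * Kp / (A * B) / (alpha * L) ^ 2)))
    with (PV * exp Y).
  2:{ unfold Rdiv at 1. rewrite <- exp_Ropp. f_equal. f_equal. unfold Y. ring. }
  assert (Hid := alg_id L B A Kp lambda alpha (Kc k r p lambda) (ln (B + 1)) ltac:(lra) ltac:(lra) ltac:(lra) HKp0 Hl Ha).
  cbv zeta in Hid. rewrite <- He in Hid. fold z in Hid.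
  assert (HT : PV <= exp (ln (B + 1) + 3 - (z - B * / A) ^ 2 / (2 * z) + Kc k r p lambda)).
  { apply Rle_trans with (1 := P1). apply exp_le_mono. lra. }
  split.
  - apply Rmult_le_pos; [lra| left; apply exp_pos].
  - apply Rle_trans with (exp (ln (B + 1) + 3 - (z - B * / A) ^ 2 / (2 * z) + Kc k r p lambda) * exp Y).
    { apply Rmult_le_compat_r; [left; apply exp_pos| exact HT]. }
    rewrite <- exp_plus. unfold Y. rewrite Hid. rewrite exp_Ropp, HBe. lra.
Qed.

Lemma t1_bound (T L al be E K : R) : 1 <= L -> 0 < al -> 0 < be -> 0 <= T <= (6 + K) * L -> 0 <= K ->
  (be * L / 4) ^ 4 <= E ->
  0 <= T / (E / (al * L) ^ 2) <= (6 + K) * al ^ 2 * 256 / be ^ 4 / L.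
Proof.
  intros HL Ha Hb HT HK HE.
  assert (H4 : 0 < (be * L / 4) ^ 4) by (apply pow_lt; nra).
  assert (HE0 : 0 < E) by lra.
  assert (Hal : 0 < (al * L) ^ 2) by (apply pow_lt; nra).
  replace (T / (E / (al * L) ^ 2)) with (T * (al * L) ^ 2 / E) by (field; lra).
  split.
  - apply Rdiv_le_0_compat; [apply Rmult_le_pos|]; lra.
  - apply Rle_trans with ((6 + K) * L * (al * L) ^ 2 / E).
    + unfold Rdiv. apply Rmult_le_compat_r. left; apply Rinv_0_lt_compat; lra.
      apply Rmult_le_compat_r; lra.
    + apply Rle_trans with ((6 + K) * L * (al * L) ^ 2 / (be * L / 4) ^ 4).
      * unfold Rdiv. apply Rmult_le_compat_l. apply Rmult_le_pos; [|lra]. apply Rmult_le_pos; lra.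
        apply Rinv_le_contravar; lra.
      * right. field. split; lra.
Qed.

Definition K1 (k : nat) (alpha r p lambda : R) :=
  (6 + Kc k r p lambda) * alpha ^ 2 * 256 / ((2 * INR k - 1) * alpha - 1) ^ 4 + lambda ^ 3 / (2 * alpha).

Lemma Kc_pos k r p lambda : 0 < r -> 0 < p < 1 -> 0 < lambda -> 0 <= Kc k r p lambda.
Proof.
  intros. unfold Kc. assert (0 < p / (1 - p)) by (apply Rdiv_lt_0_compat; lra).
  assert (0 <= INR k) by apply pos_INR. assert (0 < 2 ^ (k - 1)) by (apply pow_lt; lra).
  apply Rmult_le_pos; [|lra]. apply Rmult_le_pos; [|lra]. apply Rmult_le_pos; [|lra]. apply Rmult_le_pos; lra.
Qed.

Lemma eps_bound k alpha r p lambda n :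
  (2 <= k)%nat -> 0 < alpha -> 0 < r -> 0 < p < 1 ->
  (2 * INR k - 1) * alpha > 1 -> INR k * alpha <= 1 -> 0 < lambda ->
  X0 alpha lambda <= ln (INR n) ->
  Rabs (epsn k alpha r p lambda n) <= K1 k alpha r p lambda / ln (INR n).
Proof.
  intros Hk Ha Hr Hp Hk1 Hk2 Hl HX.
  destruct (basic_n alpha lambda n Ha Hl HX) as [HB [HL1 [HaL Hlam]]].
  assert (HKc := Kc_pos k r p lambda Hr Hp Hl).
  set (L := ln (INR n)) in *.
  set (B := INR n) in *.
  set (be := (2 * INR k - 1) * alpha - 1).
  assert (Hbe : 0 < be) by (unfold be; lra).
  assert (Hrt : rate k alpha n = exp (be * L) / (alpha * L) ^ 2).
  { unfold rate, dd, Rpower. change (ln (INR n)) with L. rewrite ln_exp. reflexivity. }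
  assert (HE : (be * L / 4) ^ 4 <= exp (be * L)) by (apply exp_ge_pow4; nra).
  set (T := ln (B + 1) + 3 + Kc k r p lambda + L).
  assert (HT : 0 <= T <= (6 + Kc k r p lambda) * L).
  { assert (0 <= ln (B + 1)) by (rewrite <- ln_1; apply ln_le; lra).
    assert (ln (B + 1) <= ln 2 + L).
    { unfold L. rewrite <- ln_mult by lra. apply ln_le; lra. }
    assert (ln 2 <= 1) by (pose proof (ln_le_sub1 2); lra).
    unfold T. split; nra. }
  destruct (t1_bound T L alpha be (exp (be * L)) (Kc k r p lambda) HL1 Ha Hbe HT HKc HE) as [T0 T1].
  set (d := delt k alpha lambda n).
  assert (Hd : 0 < d <= lambda / (alpha * L)).
  { unfold d, delt. change (ln (INR n)) with L.
    assert (0 < exp ((INR k * alpha - 1) * L) <= 1).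
    { split. apply exp_pos. apply Rle_trans with (exp 0); [apply exp_le_mono; nra| rewrite exp_0; lra]. }
    unfold Rdiv. split.
    - apply Rmult_lt_0_compat. nra. apply Rinv_0_lt_compat; lra.
    - apply Rmult_le_compat_r. left; apply Rinv_0_lt_compat; lra. nra. }
  unfold epsn. change (ln (INR n)) with L. change (INR n) with B. fold T. fold d. rewrite Hrt.
  assert (Hdd : 0 <= lambda ^ 2 / 2 * (d / (1 + d)) <= lambda ^ 3 / (2 * alpha) / L).
  { assert (0 < lambda ^ 2 / 2) by (apply Rdiv_lt_0_compat; [apply pow_lt|]; lra).
    assert (0 <= d / (1 + d) <= d).
    { split. apply Rdiv_le_0_compat; lra.
      apply (Rmult_le_reg_r (1 + d)); [lra|]. unfold Rdiv. rewrite Rmult_assoc, Rinv_l by lra. nra. }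
    split. apply Rmult_le_pos; lra.
    apply Rle_trans with (lambda ^ 2 / 2 * (lambda / (alpha * L))).
    apply Rmult_le_compat_l; lra.
    right. field. split; lra. }
  replace (lambda ^ 2 / 2 * (1 / (1 + d) - 1)) with (- (lambda ^ 2 / 2 * (d / (1 + d)))) by (field; lra).
  unfold K1. fold be.
  replace (((6 + Kc k r p lambda) * alpha ^ 2 * 256 / be ^ 4 + lambda ^ 3 / (2 * alpha)) / L)
    with ((6 + Kc k r p lambda) * alpha ^ 2 * 256 / be ^ 4 / L + lambda ^ 3 / (2 * alpha) / L) by (field; lra).
  unfold Rdiv at 1. rewrite Ropp_mult_distr_l_reverse. fold (Rdiv T (exp (be * L) / (alpha * L) ^ 2)).
  apply Rabs_le. lra.
Qed.

Theorem lemma4p6 (k : nat) (alpha r p lambda : R) :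
  (2 <= k)%nat -> 0 < alpha -> 0 < r -> 0 < p < 1 ->
  (2 * INR k - 1) * alpha > 1 -> INR k * alpha <= 1 ->
  INR k >= tau p * ln (tau p) / (tau p - 1) -> r < r_cr p ->
  0 < lambda ->
  exists eps : nat -> R,
    is_lim_seq eps 0 /\
    is_lim_seq
      (fun n => Phi_c k alpha r p n (INR n * eta1 k alpha lambda n)
                / exp (- (lambda ^ 2 / 2 + eps n) * rate k alpha n)) 0.
Proof.
  intros Hk Ha Hr Hp Hk1 Hk2 _ _ Hl.
  assert (HX0 : 0 < X0 alpha lambda).
  { unfold X0. assert (0 < / alpha) by (apply Rinv_0_lt_compat; lra).
    assert (0 < lambda / alpha) by (apply Rdiv_lt_0_compat; lra). lra. }
  exists (epsn k alpha r p lambda). split.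
  - apply is_lim_seq_spec. intros [ep Hep]. simpl.
    set (K := K1 k alpha r p lambda).
    assert (0 <= Rabs K / ep) by (apply Rdiv_le_0_compat; [apply Rabs_pos|lra]).
    destruct (ev_ln (X0 alpha lambda + Rabs K / ep + 1)) as [n0 Hn0].
    exists n0. intros n Hn. specialize (Hn0 n Hn).
    rewrite Rminus_0_r.
    assert (HXn : X0 alpha lambda <= ln (INR n)) by lra.
    assert (Hb := eps_bound k alpha r p lambda n Hk Ha Hr Hp Hk1 Hk2 Hl HXn).
    fold K in Hb. set (L := ln (INR n)) in *.
    assert (HL : 0 < L) by lra.
    apply Rle_lt_trans with (1 := Hb).
    apply Rle_lt_trans with (Rabs K / L).
    { unfold Rdiv. apply Rmult_le_compat_r. left; apply Rinv_0_lt_compat; lra. apply Rle_abs. }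
    apply (Rmult_lt_reg_r L); auto. unfold Rdiv. rewrite Rmult_assoc, Rinv_l by lra.
    assert (Rabs K / ep < L) by lra.
    apply (Rmult_lt_compat_l ep) in H0; auto.
    replace (ep * (Rabs K / ep)) with (Rabs K) in H0 by (field; lra). lra.
  - apply is_lim_seq_spec. intros [ep Hep]. simpl.
    assert (0 < / ep) by (apply Rinv_0_lt_compat; lra).
    destruct (ev_ln (X0 alpha lambda + / ep + 1)) as [n0 Hn0].
    exists n0. intros n Hn. specialize (Hn0 n Hn).
    rewrite Rminus_0_r.
    assert (HXn : X0 alpha lambda <= ln (INR n)) by lra.
    destruct (core k alpha r p lambda n Hk Ha Hr Hp Hk1 Hk2 Hl HXn) as [C0 C1].
    destruct (basic_n alpha lambda n Ha Hl HXn) as [HB _].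
    rewrite Rabs_pos_eq by exact C0.
    apply Rle_lt_trans with (1 := C1).
    assert (HBe : exp (ln (INR n)) = INR n) by (apply exp_ln; lra).
    pose proof (exp_ineq1_le (ln (INR n))).
    assert (/ ep < INR n) by lra.
    apply Rinv_lt_contravar in H1; [|apply Rmult_lt_0_compat; lra].
    rewrite Rinv_inv in H1. exact H1.
Qed.
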